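(* Let $\alpha\ge1$ and let $\beta$ be an odd positive integer, and let ${\cal C}\subseteq\mathbb{Z}_2^\alpha\times\mathbb{Z}_4^\beta$ be a separable $\mathbb{Z}_2\mathbb{Z}_4$-additive code. Then ${\cal C}$ is cyclic if and only if ${\cal C}_X$ is a binary cyclic code and ${\cal C}_Y$ is a cyclic code over $\mathbb{Z}_4$. Moreover, in this case, in polynomial representation ${\cal C}=\langle (b\mid 0),(0\mid fh+2f)\rangle$ for some $b\in\mathbb{Z}_2[x]$ dividing $x^\alpha-1$ and $f,h,g\in\mathbb{Z}_4[x]$ with $fhg=x^\beta-1$.
   Context: A $\mathbb{Z}_2\mathbb{Z}_4$-additive code is a subgroup ${\cal C}$ of $\mathbb{Z}_2^\alpha\times\mathbb{Z}_4^\beta$; vectors are written ${\bf u}=(u\mid u')$ with $u\in\mathbb{Z}_2^\alpha$, $u'\in\mathbb{Z}_4^\beta$. ${\cal C}_X$ (resp. ${\cal C}_Y$) is the projection of ${\cal C}$ onto the first $\alpha$ (resp. last $\beta$) coordinates. ${\cal C}$ is separable if ${\cal C}={\cal C}_X\times{\cal C}_Y$. ${\cal C}$ is cyclic if $\pi({\cal C})={\cal C}$, where $\pi(u_0,\dots,u_{\alpha-1}\mid u'_0,\dots,u'_{\beta-1})=(u_{\alpha-1},u_0,\dots,u_{\alpha-2}\mid u'_{\beta-1},u'_0,\dots,u'_{\beta-2})$. Vectors are identified with elements of $R_{\alpha,\beta}=\mathbb{Z}_2[x]/(x^\alpha-1)\times\mathbb{Z}_4[x]/(x^\beta-1)$ via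 $(u\mid u')\mapsto(\sum u_ix^i\mid\sum u'_ix^i)$; $R_{\alpha,\beta}$ is a $\mathbb{Z}_4[x]$-module via $p\star(b\mid a)=(\tilde pb\mid pa)$, $\tilde p$ the reduction of $p$ mod 2, and $\langle\cdot\rangle$ denotes the generated submodule. *)

(* Defs.v *)
From HB Require Import structures.
From mathcomp Require Import all_boot all_order all_algebra.
Set Implicit Arguments. Unset Strict Implicit. Unset Printing Implicit Defensive.
Import GRing.Theory.
Local Open Scope ring_scope.

Definition vec2 (a : nat) := {ffun 'I_a -> 'Z_2}.
Definition vec4 (b : nat) := {ffun 'I_b -> 'Z_4}.
Definition vec24 (a b : nat) := (vec2 a * vec4 b)%type.

(* a Z2Z4-additive code: a subgroup of Z_2^a x Z_4^b (finite, so closure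
   under 0 and + suffices) *)
Definition additive24 a b (C : {set vec24 a b}) : Prop :=
  (0, 0) \in C /\
  forall u v, u \in C -> v \in C -> (u.1 + v.1, u.2 + v.2) \in C.

Definition projX a b (C : {set vec24 a b}) : {set vec2 a} := [set u.1 | u in C].
Definition projY a b (C : {set vec24 a b}) : {set vec4 b} := [set u.2 | u in C].

Definition separable24 a b (C : {set vec24 a b}) : Prop :=
  C = [set u | (u.1 \in projX C) && (u.2 \in projY C)].

Definition cshift (R : Type) n (u : {ffun 'I_n -> R}) : {ffun 'I_n -> R} :=
  [ffun i => u (ord_pred i)].

Definition pi24 a b (u : vec24 a b) : vec24 a b := (cshift u.1, cshift u.2).

Definition cyclic24 a b (C : {set vec24 a b}) : Prop :=
  [set pi24 u | u in C] = C.

Definition cyclic_code2 a (D : {set vec2 a}) : Prop :=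
  (0 \in D /\ forall u v, u \in D -> v \in D -> u + v \in D)
  /\ [set cshift u | u in D] = D.
Definition cyclic_code4 b (D : {set vec4 b}) : Prop :=
  (0 \in D /\ forall u v, u \in D -> v \in D -> u + v \in D)
  /\ [set cshift u | u in D] = D.

Definition vpoly (R : nzRingType) n (u : {ffun 'I_n -> R}) : {poly R} :=
  \sum_(i < n) (u i)%:P * 'X^i.

Definition red2 (c : 'Z_4) : 'Z_2 := (nat_of_ord c)%:R.
Definition redp (p : {poly 'Z_4}) : {poly 'Z_2} := map_poly red2 p.

(* membership of u in the Z_4[x]-submodule <(b|0),(G)> of R_{a,b},
   i.e. u = p * (b|0) + q * (0|G) for some p, q in Z_4[x], where
   p * (b'|a') = (redp p * b' | p * a') computed in
   Z_2[x]/(x^a-1) x Z_4[x]/(x^b-1). *)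
Definition in_span24 a b (bX : {poly 'Z_2}) (G : {poly 'Z_4}) (u : vec24 a b) : Prop :=
  exists (p q : {poly 'Z_4}) (r : {poly 'Z_2}) (s : {poly 'Z_4}),
    vpoly u.1 = redp p * bX + r * ('X^a - 1) /\
    vpoly u.2 = q * G + s * ('X^b - 1).

(* Main.v *)
From HB Require Import structures.
Require Import Defs.
From mathcomp Require Import all_boot all_order all_algebra ring.
From Stdlib Require Import Classical.
Set Implicit Arguments. Unset Strict Implicit. Unset Printing Implicit Defensive.
Import GRing.Theory Pdiv.Ring.
Local Open Scope ring_scope.
Lemma red2_zmod : zmod_morphism red2.
Proof. by do 2 case=> [[|[|[|[|?]]]] ?] //; apply: val_inj. Qed.
Lemma red2_mult : monoid_morphism red2.
Proof. split; first by apply: val_inj. by do 2 case=> [[|[|[|[|?]]]] ?] //; apply: val_inj. Qed.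
HB.instance Definition _ := GRing.isZmodMorphism.Build _ _ red2 red2_zmod.
HB.instance Definition _ := GRing.isMonoidMorphism.Build _ _ red2 red2_mult.

Lemma redpD p q : redp (p + q) = redp p + redp q. Proof. exact: rmorphD. Qed.
Lemma redpM p q : redp (p * q) = redp p * redp q. Proof. exact: rmorphM. Qed.
Lemma redpB p q : redp (p - q) = redp p - redp q. Proof. exact: rmorphB. Qed.
Lemma redpXn n : redp ('X^n - 1) = 'X^n - 1.
Proof. by rewrite /redp rmorphB /= map_polyXn rmorph1. Qed.
Lemma redp2 : redp 2%:R = 0.
Proof. rewrite /redp rmorphMn rmorph1 -polyC1 -polyCMn. apply/polyP=> i; rewrite coefC coef0; case: i => //. by apply: val_inj. Qed.

Definition lift2 (c : 'Z_2) : 'Z_4 := (nat_of_ord c)%:R.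
Definition liftp (p : {poly 'Z_2}) : {poly 'Z_4} := map_poly lift2 p.
Lemma redp_lift p : redp (liftp p) = p.
Proof.
apply/polyP=> i; rewrite /redp /liftp coef_map /= coef_map_id0 //.
by case: (p`_i) => [[|[|?]] ?] //; apply: val_inj.
Qed.

Definition half4 (c : 'Z_4) : 'Z_4 := (nat_of_ord c %/ 2)%:R.
Definition halfp (p : {poly 'Z_4}) : {poly 'Z_4} := map_poly half4 p.
Lemma red0P p : redp p = 0 -> p = 2%:R * halfp p.
Proof.
move=> H; apply/polyP=> i; have := congr1 (fun q : {poly 'Z_2} => q`_i) H.
rewrite /redp /halfp coef_map coef0 -polyC1 -polyCMn coefCM coef_map_id0 //.
by case: (p`_i) => [[|[|[|[|?]]]] ?] //= _; apply: val_inj.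
Qed.
Lemma four0 : (4%:R : {poly 'Z_4}) = 0.
Proof. rewrite -polyC1 -polyCMn; apply/polyP=> i; rewrite coefC coef0; case: i => //; exact: val_inj. Qed.
Lemma twoP p q : redp p = redp q -> 2%:R * p = 2%:R * q.
Proof.
move=> H; apply/eqP; rewrite -subr_eq0 -mulrBr.
have /red0P -> : redp (p - q) = 0 by rewrite redpB H subrr.
by rewrite mulrA -natrM four0 mul0r.
Qed.

Section Gen.
Variables (R : finComNzRingType) (n : nat).
Hypothesis n_gt0 : (0 < n)%N.
Local Notation m := ('X^n - 1 : {poly R}).

Lemma m_monic : m \is monic.
Proof. by rewrite -polyC1 monicXnsubC. Qed.
Lemma size_m : size m = n.+1.
Proof. by rewrite -polyC1 size_XnsubC. Qed.

Definition vecr (P : {poly R}) : {ffun 'I_n -> R} := [ffun i : 'I_n => (rmodp P m)`_i].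

Lemma coef_vpoly (u : {ffun 'I_n -> R}) j :
  (vpoly u)`_j = \sum_(i < n) u i * (j == i)%:R.
Proof.
rewrite /vpoly coef_sum; apply: eq_bigr => i _; by rewrite coefCM coefXn.
Qed.

Lemma coef_vpoly_ord (u : {ffun 'I_n -> R}) (i : 'I_n) : (vpoly u)`_i = u i.
Proof.
rewrite coef_vpoly (bigD1 i) //= eqxx mulr1 big1 ?addr0 // => k /negPf.
by rewrite eq_sym -val_eqE /= => ->; rewrite mulr0.
Qed.

Lemma size_vpoly (u : {ffun 'I_n -> R}) : (size (vpoly u) <= n)%N.
Proof.
apply/leq_sizeP => j hj; rewrite coef_vpoly big1 // => i _.
have : j != i by apply/eqP => E; move: (ltn_ord i); rewrite -E ltnNge hj.
by move/negPf ->; rewrite mulr0.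
Qed.

Lemma size_rmodm P : (size (rmodp P m) <= n)%N.
Proof.
have := ltn_rmodpN0 P (monic_neq0 m_monic). by rewrite size_m.
Qed.

Lemma vecr_vpoly u : vecr (vpoly u) = u.
Proof.
apply/ffunP => i; rewrite ffunE rmodp_small ?coef_vpoly_ord //.
by rewrite size_m ltnS size_vpoly.
Qed.

Lemma vpoly_vecr P : vpoly (vecr P) = rmodp P m.
Proof.
apply/polyP => j; case: (ltnP j n) => hj.
  by rewrite (coef_vpoly_ord _ (Ordinal hj)) ffunE.
have /leq_sizeP -> := size_rmodm P => //.
have /leq_sizeP -> := size_vpoly (vecr P) => //.
Qed.

Lemma vecrD P Q : vecr (P + Q) = vecr P + vecr Q.
Proof. by apply/ffunP => i; rewrite !ffunE (Pdiv.RingMonic.rmodpD m_monic) coefD. Qed.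

Lemma vecr_mull s P : vecr (s * m + P) = vecr P.
Proof.
by apply/ffunP => i; rewrite !ffunE (Pdiv.RingMonic.rmodpD m_monic) (Pdiv.RingMonic.rmodp_mull m_monic) add0r.
Qed.

Lemma vecr0 : vecr 0 = 0.
Proof. by apply/ffunP => i; rewrite !ffunE rmod0p coef0. Qed.

Lemma vecrX P : vecr ('X * P) = cshift (vecr P).
Proof.
set r := rmodp P m.
have eP : P = rdivp P m * m + r := Pdiv.RingMonic.rdivp_eq m_monic P.
set w := 'X * r - (r`_n.-1)%:P * m.
have eXP : 'X * P = ('X * rdivp P m + (r`_n.-1)%:P) * m + w.
  rewrite {1}eP /w; ring.
have hw : forall j, w`_j = if j == 0%N then r`_n.-1 else if (j == n) then 0 else r`_j.-1.
  move=> j; rewrite /w coefB coefCM coefXM coefB coefXn coefC.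
  case: j => [|j] /=.
    have -> : (0 == n)%N = false by apply/eqP => E; move: n_gt0; rewrite -E.
    rewrite /=; ring.
  case: eqP => [<-|hj] /=; ring.
have sw : (size w < size m)%N.
  rewrite size_m ltnS; apply/leq_sizeP => j hj; rewrite hw.
  have -> : (j == 0)%N = false by apply/eqP => E; move: hj n_gt0; rewrite E leqn0 => /eqP ->.
  case: eqP => // jn; apply: (leq_sizeP _ _ (size_rmodm P)).
  by case: j hj jn => // j hj jn /=; rewrite -ltnS ltn_neqAle hj andbT; apply/eqP => E; apply: jn.
have ew : rmodp ('X * P) m = w.
  by rewrite eXP (Pdiv.RingMonic.rmodp_addl_mul_small m_monic).
apply/ffunP => i; rewrite /vecr /cshift !ffunE ew hw.
have -> : nat_of_ord (ord_pred i) = if (i == 0%N :> nat) then n.-1 else i.-1.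
  rewrite /=; case: i => [[|i] hi] /=; first by rewrite add0n modn_small // prednK.
  by rewrite modnDr modn_small // ltnW.
case: eqP => // i0; case: eqP => // inn; by move: (ltn_ord i); rewrite inn ltnn.
Qed.

Definition idealP (J : {poly R} -> Prop) :=
  [/\ J 0, (forall P Q, J P -> J Q -> J (P + Q)) & (forall P Q, J P -> J (Q * P))].

Lemma idealB J P Q : idealP J -> J P -> J Q -> J (P - Q).
Proof. by case=> _ hD hM hP hQ; rewrite -mulN1r; apply: hD => //; apply: hM. Qed.

Lemma code_ideal (D : {set {ffun 'I_n -> R}}) :
  (0 \in D /\ forall u v, u \in D -> v \in D -> u + v \in D) ->
  [set cshift u | u in D] = D -> (forall c : R, exists k, c = k%:R) ->
  idealP (fun P => vecr P \in D) /\ (forall s, vecr (s * m) \in D).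
Proof.
move=> [D0 DD] Dc Rn.
have I0 : vecr 0 \in D by rewrite vecr0.
have hID : forall P Q, vecr P \in D -> vecr Q \in D -> vecr (P + Q) \in D.
  by move=> P Q hP hQ; rewrite vecrD; apply: DD.
split; last by move=> s; rewrite -[s * m]addr0 vecr_mull.
split => //.
move=> P Q; elim/poly_ind: Q P => [|Q c IH] P hP; first by rewrite mul0r.
rewrite mulrDl -mulrA; apply: hID.
  - apply: IH; rewrite vecrX -Dc; exact: imset_f.
- have [k ->] := Rn c.
  rewrite polyCMn polyC1 mulr_natl.
  elim: k => [|k IHk]; first by rewrite mulr0n.
  by rewrite mulrS vecrD; apply: DD.
Qed.

End Gen.

Lemma Z2_neq0 (c : 'Z_2) : c != 0 -> c = 1.
Proof. by case: c => [[|[|?]] ?] // _; apply: val_inj. Qed.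

Lemma gen2 (J : {poly 'Z_2} -> Prop) (a : {poly 'Z_2}) :
  idealP J -> J a -> a != 0 ->
  exists b, (exists c, b * c = a) /\ forall P, J P <-> exists q, P = q * b.
Proof.
move=> hJ Ja a0.
suff : forall k (b : {poly 'Z_2}), (size b <= k)%N -> J b -> b != 0 ->
   exists b, (exists c, b * c = a) /\ forall P, J P <-> exists q, P = q * b.
  by move/(_ _ a (leqnn _) Ja a0).
elim=> [|k IH] b sb Jb b0.
  by move: b0; rewrite -size_poly_eq0; move: sb; rewrite leqn0 => ->.
case: (classic (exists b', [/\ J b', b' != 0 & (size b' < size b)%N])).
  by case=> b' [Jb' b'0 sb']; apply: (IH b') => //; rewrite -ltnS (leq_trans sb').
move=> nomin.
have bm : b \is monic by rewrite monicE; apply/eqP/Z2_neq0; rewrite lead_coef_eq0.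
have dvd : forall P, J P -> P = rdivp P b * b.
  move=> P JP; have e := Pdiv.RingMonic.rdivp_eq bm P.
  have Jr : J (rmodp P b).
    have -> : rmodp P b = P - rdivp P b * b by rewrite {2}e addrC addKr.
    by apply: idealB => //; case: hJ => _ _; apply.
  case: (eqVneq (rmodp P b) 0) => r0; first by rewrite {1}e r0 addr0.
  exfalso; apply: nomin; exists (rmodp P b); split => //.
  by apply: ltn_rmodpN0.
exists b; split; first by exists (rdivp a b); rewrite mulrC -dvd.
move=> P; split; first by move=> /dvd ->; eexists.
by case=> q ->; case: hJ => _ _; apply.
Qed.

Lemma two2 : (2%:R : {poly 'Z_2}) = 0.
Proof. rewrite -polyC1 -polyCMn; apply/polyP=> i; rewrite coefC coef0; case: i => //; exact: val_inj. Qed.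

Lemma Mn2 (p : {poly 'Z_2}) k : p *+ k = if odd k then p else 0.
Proof.
elim: k => [|k IH]; first by rewrite mulr0n.
rewrite mulrS IH /=; case: (odd k) => /=; last by rewrite addr0.
by rewrite -mulr2n -mulr_natr two2 mulr0.
Qed.

Lemma bezout2 n (X Y Z : {poly 'Z_2}) : odd n -> X * Y * Z = 'X^n - 1 ->
  exists s t, s * X + t * Y = 1.
Proof.
move=> on E.
have h1 : 'X * ('X^n - 1)^`() - ('X^n - 1) = 1 :> {poly 'Z_2}.
  rewrite derivB derivXn -polyC1 derivC subr0 polyC1 mulrnAr -exprS.
  have -> : n.-1.+1 = n by case: n on {E}.
  by rewrite Mn2 on opprB addrC addrNK.
rewrite -E !derivM in h1.
exists ('X * (Y^`() * Z + Y * Z^`()) - Y * Z), ('X * X^`() * Z).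
by rewrite -h1; ring.
Qed.

Lemma redp2M p : redp (2%:R * p) = 0.
Proof. by rewrite redpM redp2 mul0r. Qed.

Lemma hensel (K : {poly 'Z_4}) (a b s t : {poly 'Z_2}) :
  a * b = redp K -> s * a + t * b = 1 ->
  exists A B, [/\ A * B = K, redp A = a & redp B = b].
Proof.
move=> eab est.
set A0 := liftp a; set B0 := liftp b.
have r0 : redp (A0 * B0 - K) = 0 by rewrite redpB redpM !redp_lift eab subrr.
set E := halfp (A0 * B0 - K).
have eE : A0 * B0 - K = 2%:R * E := red0P r0.
set U := liftp (t * redp E); set V := liftp (s * redp E).
exists (A0 + 2%:R * U), (B0 + 2%:R * V); split.
- have e2 : 2%:R * (U * B0 + V * A0) = 2%:R * E.
    apply: twoP; rewrite redpD !redpM !redp_lift.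
    by rewrite -[RHS]mul1r -est; ring.
  have -> : (A0 + 2%:R * U) * (B0 + 2%:R * V) =
     A0 * B0 + 2%:R * (U * B0 + V * A0) + 4%:R * (U * V) by ring.
  rewrite e2 four0 mul0r addr0.
  have -> : A0 * B0 = K + 2%:R * E by rewrite -eE addrC subrK.
  by rewrite -addrA -mulrDl -natrD four0 mul0r addr0.
- by rewrite redpD redp2M addr0 redp_lift.
- by rewrite redpD redp2M addr0 redp_lift.
Qed.

Lemma struct4 n (J : {poly 'Z_4} -> Prop) : odd n ->
  idealP J -> (forall s, J (s * ('X^n - 1))) ->
  exists f h g, f * h * g = 'X^n - 1 /\
    forall P, J P <-> exists q s, P = q * (f * h + 2%:R * f) + s * ('X^n - 1).
Proof.
move=> on hJ Jm.
have n0 : (0 < n)%N by rewrite lt0n; apply: contraTneq on => ->.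
set m4 : {poly 'Z_4} := 'X^n - 1.
set m2 : {poly 'Z_2} := 'X^n - 1.
have [J0 JD JM] := hJ.
have JB : forall P Q, J P -> J Q -> J (P - Q) by move=> P Q; apply: idealB.
have redm : redp m4 = m2 by rewrite redpXn.
have m20 : m2 != 0 by rewrite -size_poly_eq0 size_m.
pose J1 := fun pb => exists P, J P /\ redp P = pb.
pose J2 := fun pb => exists P, redp P = pb /\ J (2%:R * P).
have hJ1 : idealP J1.
  split.
  - by exists 0; split => //; rewrite /redp map_poly0.
  - by move=> _ _ [P [JP <-]] [Q [JQ <-]]; exists (P + Q); rewrite redpD; split => //; apply: JD.
  - move=> _ Q [P [JP <-]]; exists (liftp Q * P); split; first exact: JM.
    by rewrite redpM redp_lift.
have hJ2 : idealP J2.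
  split.
  - by exists 0; rewrite mulr0 /redp map_poly0.
  - move=> _ _ [P [<- JP]] [Q [<- JQ]]; exists (P + Q); rewrite redpD mulrDr; split => //.
    exact: JD.
  - move=> _ Q [P [<- JP]]; exists (liftp Q * P); rewrite redpM redp_lift mulrCA; split => //.
    exact: JM.
have Jm4 : J m4 by rewrite -[m4]mul1r; apply: Jm.
have J1m : J1 m2 by exists m4.
have J2m : J2 m2 by exists m4; split => //; apply: JM.
have [a [[c1 ac1] J1a]] := gen2 hJ1 J1m m20.
have [cc [[c2 cc2] J2c]] := gen2 hJ2 J2m m20.
have J2a : J2 a.
  have [P [JP rP]] : J1 a by apply/J1a; exists 1; rewrite mul1r.
  by exists P; split => //; apply: JM.
have [hb ehb] : exists hb, a = hb * cc by apply/J2c.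
have e1 : cc * (hb * c1) * 1 = m2 by rewrite mulr1 -ac1 ehb mulrA [cc * hb]mulrC.
have [s1 [t1 b1]] := bezout2 on e1.
have e1' : cc * (hb * c1) = redp m4 by rewrite redm -e1 mulr1.
have [f [K [fK rf rK]]] := hensel e1' b1.
have e2 : hb * c1 * cc = m2 by rewrite -e1 mulr1 mulrC.
have [s2 [t2 b2]] := bezout2 on e2.
have [h [g [hg rh rg]]] := hensel (esym rK) b2.
have e3 : cc * c1 * hb = m2 by rewrite -e1 mulr1 -mulrA [c1 * hb]mulrC.
have [s3 [t3 b3]] := bezout2 on e3.
have fhg : f * h * g = m4 by rewrite -mulrA hg.
exists f, h, g; split => //.
have J2f : J (2%:R * f).
  have [P0 [rP0 JP0]] : J2 cc by apply/J2c; exists 1; rewrite mul1r.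
  by rewrite (twoP (etrans rf (esym rP0))).
have Jfh : J (f * h).
  have [P1 [JP1 rP1]] : J1 a by apply/J1a; exists 1; rewrite mul1r.
  have r0 : redp (P1 - f * h) = 0 by rewrite redpB redpM rf rh rP1 ehb mulrC subrr.
  have eQ := red0P r0; set Q := halfp _ in eQ.
  have JgQ : J (2%:R * (g * Q)).
    have -> : 2%:R * (g * Q) = g * P1 - m4.
      have -> : P1 = f * h + 2%:R * Q by rewrite -eQ addrC subrK.
      by rewrite -fhg; ring.
    by apply: JB => //; apply: JM.
  have [k ek] : exists k, redp (g * Q) = k * cc by apply/J2c; exists (g * Q).
  have eQ2 : redp Q = (redp Q * s3 + t3 * k) * cc.
    rewrite redpM rg in ek.
    rewrite -[LHS]mulr1 -b3.
    transitivity (redp Q * s3 * cc + t3 * (c1 * redp Q)); first ring.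
    rewrite ek; ring.
  have -> : f * h = P1 - 2%:R * Q by rewrite -eQ opprB addrC subrK.
  apply: JB => //.
  have -> : 2%:R * Q = liftp (redp Q * s3 + t3 * k) * (2%:R * f).
    rewrite mulrCA; apply: twoP; by rewrite redpM redp_lift rf -eQ2.
  exact: JM.
set G := f * h + 2%:R * f.
have JG : J G by apply: JD.
pose J' := fun P => exists q s, P = q * G + s * m4.
have J'D : forall P Q, J' P -> J' Q -> J' (P + Q).
  move=> _ _ [q1 [s1' ->]] [q2 [s2' ->]]; exists (q1 + q2), (s1' + s2'); ring.
have J'M : forall P Q, J' P -> J' (Q * P).
  move=> _ Q [q1 [s1' ->]]; exists (Q * q1), (Q * s1'); ring.
have J'G : J' G by exists 1, 0; ring.
have J'm : J' m4 by exists 0, 1; ring.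
have J'B : forall P Q, J' P -> J' Q -> J' (P - Q).
  by move=> P Q hP hQ; apply: J'D => //; rewrite -mulN1r; apply: J'M.
have J'2fh : J' (2%:R * (f * h)).
  have -> : 2%:R * (f * h) = 2%:R * G - 4%:R * f by rewrite /G; ring.
  by rewrite four0 mul0r subr0; apply: J'M.
have J'2fg : J' (2%:R * (f * g)).
  have -> : 2%:R * (f * g) = g * G - m4 by rewrite /G -fhg; ring.
  by apply: J'B => //; apply: J'M.
have J'2f : J' (2%:R * f).
  have -> : 2%:R * f = liftp s2 * (2%:R * (f * h)) + liftp t2 * (2%:R * (f * g)).
    have -> : liftp s2 * (2%:R * (f * h)) + liftp t2 * (2%:R * (f * g)) =
              2%:R * (f * (liftp s2 * h + liftp t2 * g)) by ring.
    apply: twoP; by rewrite redpM redpD !redpM !redp_lift rh rg b2 mulr1.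
  by apply: J'D; apply: J'M.
have J'fh : J' (f * h).
  have -> : f * h = G - 2%:R * f by rewrite /G addrK.
  exact: J'B.
move=> P; split; last first.
  by case=> q [s ->]; apply: JD; apply: JM.
move=> JP.
have [k ek] : exists k, redp P = k * a by apply/J1a; exists P.
have r0 : redp (P - liftp k * (f * h)) = 0.
  by rewrite redpB !redpM redp_lift rf rh ek ehb [hb * cc]mulrC subrr.
have eR := red0P r0; set R := halfp _ in eR.
have J2R : J (2%:R * R) by rewrite -eR; apply: JB => //; apply: JM.
have [l el] : exists l, redp R = l * cc by apply/J2c; exists R.
have -> : P = liftp k * (f * h) + 2%:R * R by rewrite -eR addrC subrK.
apply: J'D; first exact: J'M.
have -> : 2%:R * R = liftp l * (2%:R * f).
  by rewrite mulrCA; apply: twoP; rewrite redpM redp_lift rf el.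
exact: J'M.
Qed.



Lemma imset_stable (T : finType) (f : T -> T) (S : {set T}) : injective f ->
  ([set f x | x in S] = S <-> forall x, x \in S -> f x \in S).
Proof.
move=> fi; split; first by move=> E x xS; rewrite -E; apply: imset_f.
move=> st; apply/eqP; rewrite eqEcard card_imset // leqnn andbT.
by apply/subsetP => _ /imsetP [x xS ->]; apply: st.
Qed.

Lemma cshift_inj (R : Type) n : injective (@cshift R n).
Proof.
move=> u v e; apply/ffunP => i.
have := congr1 (fun w : {ffun 'I_n -> R} => w (ordS i)) e; by rewrite /cshift !ffunE ordSK.
Qed.

Lemma pi24_inj a b : injective (@pi24 a b).
Proof.
by case=> u1 u2 [v1 v2] [/cshift_inj -> /cshift_inj ->].
Qed.

Lemma Zp_nat_ex p (c : 'Z_p) : exists k, c = k%:R.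
Proof. exists (nat_of_ord c). by rewrite natr_Zp. Qed.

Unset Implicit Arguments.

Theorem mainTheorem2 (alpha beta : nat) (C : {set vec24 alpha beta}) :
  (1 <= alpha)%N -> odd beta ->
  additive24 C -> separable24 C ->
  (cyclic24 C <-> cyclic_code2 (projX C) /\ cyclic_code4 (projY C)) /\
  (cyclic24 C ->
   exists (bX : {poly 'Z_2}) (f h g : {poly 'Z_4}),
     (exists c : {poly 'Z_2}, bX * c = 'X^alpha - 1) /\
     f * h * g = 'X^beta - 1 /\
     forall u : vec24 alpha beta, u \in C <-> in_span24 bX (f * h + 2%:R * f) u).
Proof.
move=> a0 ob [C0 CD] sep.
have b0 : (0 < beta)%N by rewrite lt0n; apply: contraTneq ob => ->.
have memC : forall u, u \in C = (u.1 \in projX C) && (u.2 \in projY C).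
  by move=> u; rewrite {1}sep inE.
have addX : 0 \in projX C /\ forall u v, u \in projX C -> v \in projX C -> u + v \in projX C.
  split; first by apply/imsetP; exists (0, 0).
  move=> _ _ /imsetP [x xC ->] /imsetP [y yC ->]; apply/imsetP.
  by exists (x.1 + y.1, x.2 + y.2) => //; apply: CD.
have addY : 0 \in projY C /\ forall u v, u \in projY C -> v \in projY C -> u + v \in projY C.
  split; first by apply/imsetP; exists (0, 0).
  move=> _ _ /imsetP [x xC ->] /imsetP [y yC ->]; apply/imsetP.
  by exists (x.1 + y.1, x.2 + y.2) => //; apply: CD.
have cycE : cyclic24 C <-> cyclic_code2 (projX C) /\ cyclic_code4 (projY C).
  rewrite /cyclic24 /cyclic_code2 /cyclic_code4 (imset_stable _ (@pi24_inj _ _)).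
  rewrite !(imset_stable _ (@cshift_inj _ _)).
  split.
    move=> st; split; split => // _ /imsetP [x xC ->]; apply/imsetP;
      exists (pi24 x) => //; exact: st.
  case=> [[_ stX] [_ stY]] x; rewrite !memC => /andP [h1 h2].
  by apply/andP; split; [apply: stX | apply: stY].
split => // cyc.
have [[_ cX] [_ cY]] := cycE.1 cyc.
have [I2 mI2] := code_ideal a0 addX cX (@Zp_nat_ex 2).
have m20 : ('X^alpha - 1 : {poly 'Z_2}) != 0 by rewrite -size_poly_eq0 size_m.
have J2m := mI2 1; rewrite mul1r in J2m.
have [bX [dvd hb]] := gen2 I2 J2m m20.
have [I4 mI4] := code_ideal b0 addY cY (@Zp_nat_ex 4).
have [f [h [g [fhg hY]]]] := struct4 ob I4 mI4.
exists bX, f, h, g; split => //; split => //.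
have hb' : forall P, vecr alpha P \in projX C <-> exists q, P = q * bX := hb.
have hY' : forall P, vecr beta P \in projY C <-> exists q s, P = q * (f * h + 2%:R * f) + s * ('X^beta - 1) := hY.
case=> u1 u2; rewrite memC /in_span24 /=.
split.
- case/andP => h1 h2.
  rewrite -(vecr_vpoly a0 u1) in h1; case/hb': h1 => q e.
  rewrite -(vecr_vpoly b0 u2) in h2; case/hY': h2 => q' [s e'].
  by exists (liftp q), q', 0, s; rewrite redp_lift mul0r addr0.
- case=> p [q [r [s [e1 e2]]]]; apply/andP; split.
    rewrite -(vecr_vpoly a0 u1) e1 addrC (vecr_mull a0); apply/hb'.
    by exists (redp p).
  by rewrite -(vecr_vpoly b0 u2); apply/hY'; exists q, s.
Qed.
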